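(* Let $x_1,\dots,x_H\in\mathbb{R}^d$, $\theta_a^\star\in\mathbb{R}^d$ for $a\in\mathcal{M}=\{1,\dots,N\}$, $\alpha>0$ and $\lambda_a>0$. For $S\subseteq\mathcal{M}$ let $\mu_t(a;S):=\langle\theta_a^\star,x_t\rangle-\alpha\lambda_a\mathbf{1}\{a\notin S\}$ and $$f(S):=\sum_{t=1}^H\Bigl[\max_{a\in\mathcal{M}}\mu_t(a;S)-\max_{a\in\mathcal{M}}\mu_t(a;\emptyset)\Bigr].$$ Then $f$ is monotone non-decreasing and submodular on subsets of $\mathcal{M}$. *)

(* Defs.v *)
From HB Require Import structures.
From mathcomp Require Import all_boot all_order all_algebra.
Set Implicit Arguments. Unset Strict Implicit. Unset Printing Implicit Defensive.
Import Order.TTheory GRing.Theory Num.Theory.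
Local Open Scope ring_scope.

Definition dotp (R : realFieldType) (d : nat) (u v : 'rV[R]_d) : R :=
  \sum_(i < d) u 0 i * v 0 i.

(* Maximum of F over the nonempty finite type 'I_N (a0 witnesses nonemptiness;
   since max is idempotent the value does not depend on a0). *)
Definition maxI (R : realFieldType) (N : nat) (a0 : 'I_N) (F : 'I_N -> R) : R :=
  \big[Num.max/F a0]_(a : 'I_N) F a.

Definition mu (R : realFieldType) (d N H : nat) (x : 'I_H -> 'rV[R]_d)
  (theta : 'I_N -> 'rV[R]_d) (alpha : R) (lam : 'I_N -> R)
  (t : 'I_H) (a : 'I_N) (S : {set 'I_N}) : R :=
  dotp (theta a) (x t) - alpha * lam a * (a \notin S)%:R.

Definition fval (R : realFieldType) (d N H : nat) (a0 : 'I_N)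
  (x : 'I_H -> 'rV[R]_d) (theta : 'I_N -> 'rV[R]_d) (alpha : R)
  (lam : 'I_N -> R) (S : {set 'I_N}) : R :=
  \sum_(t < H) (maxI a0 (fun a => mu x theta alpha lam t a S)
                - maxI a0 (fun a => mu x theta alpha lam t a set0)).

Definition monotone_setfun (R : realFieldType) (T : finType) (f : {set T} -> R) :=
  forall S U : {set T}, S \subset U -> f S <= f U.

Definition submodular (R : realFieldType) (T : finType) (f : {set T} -> R) :=
  forall S U : {set T}, f (S :|: U) + f (S :&: U) <= f S + f U.

(* Main.v *)
Require Import Defs.
From HB Require Import structures.
From mathcomp Require Import all_boot all_order all_algebra.
Import Order.TTheory GRing.Theory Num.Theory.
Local Open Scope ring_scope.
Set Implicit Arguments.

Section Aux.
Variables (R : realFieldType) (N : nat) (a0 : 'I_N).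

Lemma maxI_le (F : 'I_N -> R) (y : R) :
  (forall a, F a <= y) -> maxI a0 F <= y.
Proof.
move=> Hy; rewrite /maxI; apply: (big_ind (fun v => v <= y)) => //.
by move=> u v Hu Hv; rewrite ge_max Hu Hv.
Qed.

Lemma le_maxI (F : 'I_N -> R) a : F a <= maxI a0 F.
Proof.
rewrite /maxI.
have : a \in index_enum 'I_N by exact: mem_index_enum.
elim: (index_enum 'I_N) => [|b s IH] //.
rewrite in_cons big_cons => /orP [/eqP -> | /IH H].
  by rewrite le_max lexx.
by rewrite le_max H orbT.
Qed.
End Aux.
Arguments le_maxI {R N} a0 F a.
Arguments maxI_le {R N} a0 F y.

Theorem lemmaC3 (R : realFieldType) (d N H : nat) (a0 : 'I_N)
  (x : 'I_H -> 'rV[R]_d) (theta : 'I_N -> 'rV[R]_d) (alpha : R)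
  (lam : 'I_N -> R) :
  0 < alpha -> (forall a, 0 < lam a) ->
  monotone_setfun (fval a0 x theta alpha lam) /\
  submodular (fval a0 x theta alpha lam).
Proof.
move=> Ha Hl.
pose g t S := maxI a0 (fun a => mu x theta alpha lam t a S).
have Hb : forall a, 0 <= alpha * lam a.
  by move=> a; apply: mulr_ge0; apply: ltW.
have mumono : forall t a (S U : {set 'I_N}), S \subset U ->
    mu x theta alpha lam t a S <= mu x theta alpha lam t a U.
  move=> t a S U sSU; rewrite /mu lerD2l lerN2.
  case aU: (a \in U); case aS: (a \in S) => //=; rewrite ?mulr0 ?mulr1 ?lexx ?Hb //.
  by move/subsetP: sSU => /(_ a); rewrite aS aU => /(_ isT).
have gmono : forall t (S U : {set 'I_N}), S \subset U -> g t S <= g t U.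
  move=> t S U sSU; apply: maxI_le => a.
  apply: le_trans (mumono t a S U sSU) _. exact: (le_maxI a0 (fun a => mu x theta alpha lam t a U) a).
have gU : forall t (S U : {set 'I_N}), g t (S :|: U) <= Num.max (g t S) (g t U).
  move=> t S U; apply: maxI_le => a.
  have : mu x theta alpha lam t a (S :|: U) = mu x theta alpha lam t a S \/
         mu x theta alpha lam t a (S :|: U) = mu x theta alpha lam t a U.
    rewrite /mu in_setU; case: (a \in S); case: (a \in U); by [left|right].
  by case=> ->; rewrite le_max le_maxI ?orbT.
have fE : forall S, fval a0 x theta alpha lam S = \sum_(t < H) g t S - \sum_(t < H) g t set0.
  by move=> S; rewrite /fval sumrB.
split.
  move=> S U sSU; rewrite !fE lerD2r; apply: ler_sum => t _; exact: gmono.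
move=> S U; rewrite !fE.
suff : \sum_(t < H) g t (S :|: U) + \sum_(t < H) g t (S :&: U) <=
       \sum_(t < H) g t S + \sum_(t < H) g t U.
  by move=> h; rewrite addrACA [X in _ <= X]addrACA lerD2r.
rewrite -!big_split /=; apply: ler_sum => t _.
have h1 := gU t S U.
have h2 := gmono t _ _ (subsetIl S U).
have h3 := gmono t _ _ (subsetIr S U).
case: (leP (g t S) (g t U)) => hl.
  rewrite (max_idPr hl) in h1.
  by rewrite addrC lerD.
rewrite (max_idPl (ltW hl)) in h1.
by rewrite lerD.
Qed.
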